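(* A norm $\gamma$ on $\mathbb{R}^d$ is uniformly robust if and only if $\mathrm{EH}_\gamma(A)$ is bounded for every finite set $A\subset\mathbb{R}^d$.
   Context: A norm is a symmetric gauge (Minkowski functional of a symmetric convex compact set $B_\gamma$ with $0$ in its interior); its skewness $\sigma=\sup_{x\ne0}\gamma(x)/\gamma(-x)$ equals $1$. $\gamma^\circ$ is the dual norm with unit ball $B_{\gamma^\circ}$. For weighted sets, $(D,w)+(C,v)$ is $D\cup C$ with weights added at common points. A Fermat–Weber point of a finite positively weighted set is a minimizer of $x\mapsto\sum_s u_s\gamma(x-s)$. The gauge $\gamma$ is called uniformly robust if for every finite set $D$ with positive weights $w$ (total $w_D$) there is a bounded set $K$ such that for every finite set $C$ with positive weights $v$ satisfying $\sigma v_C<w_D$, all Fermat–Weber points of $(D,w)+(C,v)$ lie in $K$. For $p\in B_{\gamma^\circ}$: if $\gamma^\circ(p)=1$, $N(p)=\mathbb{R}_{\ge0}F(p)$ with $F(p)=\{x\in B_\gamma:\langle p,x\rangle=1\}$; otherwise $N(p)=\{0\}$. For finite $S$ and $\pi=(p_s)_{s\in S}\subset B_{\gamma^\circ}$, $C_\pi=\bigcap_{s\in S}(s+N(p_s))$; a nonempty $C_\pi$ is an elementary convex set for $S$; $\mathrm{EH}_\gamma(S)$ is the union of all bounded elementary convex sets for $S$. *)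

(* Defs.v *)
From HB Require Import structures.
From mathcomp Require Import all_boot all_order all_algebra.
From mathcomp Require Import boolp classical_sets reals.
Set Implicit Arguments. Unset Strict Implicit. Unset Printing Implicit Defensive.
Import Order.TTheory GRing.Theory Num.Theory.
Local Open Scope ring_scope.
Local Open Scope classical_set_scope.

Section FW.
Variables (R : realType) (d : nat).
Notation vec := 'rV[R]_d.

Definition inner (p x : vec) : R := \sum_(i < d) p 0 i * x 0 i.

Definition is_norm (g : vec -> R) : Prop :=
  [/\ forall x, g x = 0 -> x = 0,
      forall (t : R) x, g (t *: x) = `|t| * g x
    & forall x y, g (x + y) <= g x + g y].

Definition ball_g (g : vec -> R) : set vec := [set x | g x <= 1].

Definition dual_g (g : vec -> R) (p : vec) : R :=
  sup [set inner p x | x in ball_g g].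

Definition skewness (g : vec -> R) : R :=
  sup [set g x / g (- x) | x in [set x : vec | x != 0]].

Definition bounded_set (A : set vec) : Prop :=
  exists M : R, forall x, A x -> forall i, `|x 0 i| <= M.

Definition Fface (g : vec -> R) (p : vec) : set vec :=
  [set x | ball_g g x /\ inner p x = 1].

Definition Ncone (g : vec -> R) (p : vec) : set vec :=
  if dual_g g p == 1 then
    [set y | exists (t : R) (x : vec), 0 <= t /\ Fface g p x /\ y = t *: x]
  else [set 0].

Definition Cpi (g : vec -> R) (S : seq vec) (pi : vec -> vec) : set vec :=
  [set x | forall s, s \in S -> exists y, Ncone g (pi s) y /\ x = s + y].

Definition admissible (g : vec -> R) (S : seq vec) (pi : vec -> vec) : Prop :=
  forall s, s \in S -> dual_g g (pi s) <= 1.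

Definition EH (g : vec -> R) (S : seq vec) : set vec :=
  [set x | exists pi, admissible g S pi /\ Cpi g S pi !=set0 /\
                      bounded_set (Cpi g S pi) /\ Cpi g S pi x].

Definition wset (D : seq vec) (w : vec -> R) : Prop :=
  uniq D /\ forall s, s \in D -> 0 < w s.

Definition total_weight (D : seq vec) (w : vec -> R) : R := \sum_(s <- D) w s.

Definition wsum_pts (D C : seq vec) : seq vec := undup (D ++ C).
Definition wsum_wt (D : seq vec) (w : vec -> R) (C : seq vec) (v : vec -> R)
  : vec -> R :=
  fun s => (if s \in D then w s else 0) + (if s \in C then v s else 0).

Definition fw_obj (g : vec -> R) (P : seq vec) (u : vec -> R) (x : vec) : R :=
  \sum_(s <- P) u s * g (x - s).

Definition FW_point (g : vec -> R) (P : seq vec) (u : vec -> R) (x : vec) : Prop :=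
  forall y, fw_obj g P u x <= fw_obj g P u y.

Definition uniformly_robust (g : vec -> R) : Prop :=
  forall (D : seq vec) (w : vec -> R), wset D w ->
  exists K : set vec, bounded_set K /\
    forall (C : seq vec) (v : vec -> R), wset C v ->
      skewness g * total_weight C v < total_weight D w ->
      forall x, FW_point g (wsum_pts D C) (wsum_wt D w C v) x -> K x.

End FW.

(* Main.v *)
From HB Require Import structures.
From mathcomp Require Import all_boot all_order all_algebra.
From mathcomp Require Import all_classical all_reals.
From mathcomp Require Import all_analysis.
From mathcomp Require Import lra ring.
Require Import Defs.
Set Implicit Arguments. Unset Strict Implicit. Unset Printing Implicit Defensive.
Import Order.TTheory GRing.Theory Num.Theory.
Import numFieldTopology.Exports numFieldNormedType.Exports.
Local Open Scope ring_scope.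
Local Open Scope classical_set_scope.
Lemma lip_cont (R : realType) (d : nat) (f : 'rV[R]_d -> R) (K : R) :
  0 <= K -> (forall x y, `|f y - f x| <= K * `|y - x|) -> continuous f.
Proof.
move=> K0 Hf x; apply/(@cvgrPdist_lt _ _ _ _ (nbhs_filter x)) => e e0.
apply/(@nbhs_normP R [the pseudoMetricNormedZmodType R of (matrix R 1 d)] x); exists (e / (K + 1)); first by rewrite /= divr_gt0 //; lra.
move=> y /= hxy.
rewrite distrC (le_lt_trans (Hf _ _)) // distrC.
apply: (le_lt_trans (y := (K + 1) * `|x - y|)).
  by rewrite ler_wpM2r //; lra.
by rewrite mulrC -ltr_pdivlMr //; lra.
Qed.

Lemma coord_le_norm (R : realType) (d : nat) (x : 'rV[R]_d) i : `|x 0 i| <= `|x|.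
Proof.
have -> : `|x| = mx_norm x by [].
rewrite mx_normrE.
exact: (le_bigmax _ _ (0, i)).
Qed.

Section Norm.
Variables (R : realType) (d : nat) (g : 'rV[R]_d -> R).
Hypothesis hg : is_norm g.
Local Notation vec := 'rV[R]_d.

Lemma gZ t x : g (t *: x) = `|t| * g x. Proof. by case: hg => _ h _; exact: h. Qed.
Lemma gD x y : g (x + y) <= g x + g y. Proof. by case: hg => _ _ h; exact: h. Qed.
Lemma g_eq0 x : g x = 0 -> x = 0. Proof. by case: hg => h _ _; exact: h. Qed.
Lemma g0 : g 0 = 0.
Proof. by rewrite -(scale0r (0 : vec)) gZ normr0 mul0r. Qed.
Lemma gN x : g (- x) = g x.
Proof. by rewrite -scaleN1r gZ normrN normr1 mul1r. Qed.
Lemma g_ge0 x : 0 <= g x.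
Proof. have := gD x (- x); rewrite subrr g0 gN => h; lra. Qed.
Lemma gZp t x : 0 <= t -> g (t *: x) = t * g x.
Proof. by move=> t0; rewrite gZ ger0_norm. Qed.
Lemma gB x y : g x - g y <= g (x - y).
Proof. have := gD (x - y) y; rewrite subrK => h; lra. Qed.
Lemma g_lip x y : `|g y - g x| <= g (y - x).
Proof.
rewrite ler_norml gB andbT; have := gB x y.
by rewrite -(gN (y - x)) opprB => h; lra.
Qed.

Lemma g_sum (I : Type) (r : seq I) (F : I -> vec) :
  g (\sum_(i <- r) F i) <= \sum_(i <- r) g (F i).
Proof.
elim: r => [|a r IH]; first by rewrite !big_nil g0.
rewrite !big_cons; apply: le_trans (gD _ _) _; exact: lerD.
Qed.

Lemma g_upper : exists K, 0 <= K /\ forall x, g x <= K * `|x|.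
Proof.
exists (\sum_i g (delta_mx 0 i)); split; first by apply: sumr_ge0 => i _; exact: g_ge0.
move=> x; rewrite {1}(row_sum_delta x); apply: le_trans (g_sum _ _) _.
rewrite mulr_suml; apply: ler_sum => i _; rewrite gZ mulrC.
by rewrite ler_wpM2l ?g_ge0 // coord_le_norm.
Qed.

Lemma g_cont : continuous g.
Proof.
have [K [K0 HK]] := g_upper.
apply: (lip_cont K0) => x y; apply: le_trans (g_lip _ _) _; exact: HK.
Qed.

Lemma norm_lower : exists M, 0 <= M /\ forall x : vec, `|x| <= M * g x.
Proof.
have [d0|dpos] := eqVneq d 0%N.
  exists 0; split => // x; rewrite mul0r.
  suff -> : x = 0 by rewrite normr0.
  by apply/rowP => i; have := ltn_ord i; rewrite {2}d0.
have d0 : (0 < d)%N by rewrite lt0n.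
pose e : vec := delta_mx 0 (Ordinal d0).
have e0 : e != 0.
  apply/negP => /eqP/rowP/(_ (Ordinal d0)); rewrite !mxE !eqxx /=.
  by move/eqP; rewrite oner_eq0.
pose S := [set x : vec | `|x| = 1].
have nzS : forall x : vec, x != 0 -> S (`|x|^-1 *: x).
  move=> x x0; rewrite /S /= normrZ normrV ?unitfE ?normr_eq0 //.
  by rewrite normr_id mulVf // normr_eq0.
have S0 : S !=set0 by exists (`|e|^-1 *: e); exact: nzS.
have cS : compact S.
  apply: bounded_closed_compact.
    exists 1; split; first exact: num_real.
    by move=> M hM x /= ->; rewrite ltW.
  apply: (@preimage_closed _ _ (fun x : vec => `|x|) [set 1]).
    by move=> x _; exact: norm_continuous.
  exact: closed_eq.
have cg : {within S, continuous g} by apply: continuous_subspaceT; exact: g_cont.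
have [c cS' cmin] := EVT_min_rV S0 cS cg.
have c0 : c != 0.
  apply/negP => /eqP c0; move: cS'; rewrite inE /S /= c0 normr0 => /eqP.
  by rewrite eq_sym oner_eq0.
have gc : 0 < g c.
  rewrite lt_def g_ge0 andbT; apply/negP => /eqP/g_eq0 /eqP.
  by rewrite (negbTE c0).
exists (g c)^-1; split; first by rewrite invr_ge0 ltW.
move=> x; have [->|x0] := eqVneq x 0; first by rewrite normr0 g0 mulr0.
have := cmin _ (mem_set (nzS x x0)); rewrite gZ normrV ?unitfE ?normr_eq0 //.
rewrite normr_id => h.
have hx : 0 < `|x| by rewrite normr_gt0.
have h2 : `|x| * g c <= g x.
  by have := ler_wpM2l (ltW hx) h; rewrite mulrA mulfV ?gt_eqF // mul1r.
by rewrite mulrC ler_pdivlMr.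
Qed.

Lemma coord_lower : exists M, 0 <= M /\ forall (x : vec) i, `|x 0 i| <= M * g x.
Proof.
have [M [M0 HM]] := norm_lower; exists M; split => // x i.
exact: le_trans (coord_le_norm _ _) (HM x).
Qed.

End Norm.


Section Inner.
Variables (R : realType) (d : nat).
Local Notation vec := 'rV[R]_d.
Implicit Types p x y : vec.

Lemma innerDr p x y : inner p (x + y) = inner p x + inner p y.
Proof. by rewrite /inner -big_split; apply: eq_bigr => i _; rewrite mxE mulrDr. Qed.
Lemma innerDl p q x : inner (p + q) x = inner p x + inner q x.
Proof. by rewrite /inner -big_split; apply: eq_bigr => i _; rewrite mxE mulrDl. Qed.
Lemma innerZr p t x : inner p (t *: x) = t * inner p x.
Proof. by rewrite /inner mulr_sumr; apply: eq_bigr => i _; rewrite mxE mulrCA. Qed.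
Lemma innerZl p t x : inner (t *: p) x = t * inner p x.
Proof. by rewrite /inner mulr_sumr; apply: eq_bigr => i _; rewrite mxE mulrA. Qed.
Lemma inner0r p : inner p 0 = 0.
Proof. by rewrite -(scale0r (0 : vec)) innerZr mul0r. Qed.
Lemma inner0l x : inner 0 x = 0.
Proof. by rewrite -(scale0r (0 : vec)) innerZl mul0r. Qed.
Lemma innerNr p x : inner p (- x) = - inner p x.
Proof. by rewrite -scaleN1r innerZr mulN1r. Qed.
Lemma innerNl p x : inner (- p) x = - inner p x.
Proof. by rewrite -scaleN1r innerZl mulN1r. Qed.
Lemma innerBr p x y : inner p (x - y) = inner p x - inner p y.
Proof. by rewrite innerDr innerNr. Qed.
Lemma innerBl p q x : inner (p - q) x = inner p x - inner q x.
Proof. by rewrite innerDl innerNl. Qed.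
Lemma inner_suml (I : Type) (r : seq I) (F : I -> vec) x :
  inner (\sum_(i <- r) F i) x = \sum_(i <- r) inner (F i) x.
Proof.
elim: r => [|a r IH]; first by rewrite !big_nil inner0l.
by rewrite !big_cons innerDl IH.
Qed.
Lemma inner_delta p i : inner p (delta_mx 0 i) = p 0 i.
Proof.
rewrite /inner (bigD1 i) //= big1 ?addr0; first by rewrite mxE !eqxx mulr1.
by move=> j ji; rewrite mxE (negbTE ji) andbF mulr0.
Qed.
Lemma inner_abs_le p x : `|inner p x| <= (\sum_i `|p 0 i|) * `|x|.
Proof.
rewrite /inner mulr_suml; apply: le_trans (ler_norm_sum _ _ _) _.
apply: ler_sum => i _; rewrite normrM ler_wpM2l //; exact: coord_le_norm.
Qed.
Lemma inner_ge0_eq0 p : (forall x, 0 <= inner p x) -> p = 0.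
Proof.
move=> h; have := h (- p); rewrite innerNr oppr_ge0 => hp.
have hpp : inner p p = 0.
  apply/eqP; rewrite eq_le hp /=; apply: sumr_ge0 => i _; by rewrite -expr2 sqr_ge0.
apply/rowP => i; rewrite mxE; apply/eqP; rewrite -sqrf_eq0 expr2; apply/eqP.
move/eqP: hpp; rewrite psumr_eq0 => [/allP/(_ i)|]; last by move=> j _; by rewrite -expr2 sqr_ge0.
by rewrite mem_index_enum => /(_ isT) /= /eqP.
Qed.
End Inner.

Section Dual.
Variables (R : realType) (d : nat) (g : 'rV[R]_d -> R).
Hypothesis hg : is_norm g.
Local Notation vec := 'rV[R]_d.
Implicit Types p x y : vec.

Lemma ball_bounded : exists M, forall x, ball_g g x -> `|x| <= M.
Proof.
have [M [M0 HM]] := norm_lower hg; exists M => x /= hx.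
apply: le_trans (HM x) _; rewrite -[X in _ <= X]mulr1; exact: ler_wpM2l.
Qed.

Lemma dual_has_sup p : has_sup [set inner p x | x in ball_g g].
Proof.
split; first by exists (inner p 0), 0 => //; rewrite /ball_g /= (g0 hg).
have [M HM] := ball_bounded.
exists ((\sum_i `|p 0 i|) * M) => _ [x hx <-].
apply: le_trans (ler_norm _) _; apply: le_trans (inner_abs_le _ _) _.
by rewrite ler_wpM2l ?sumr_ge0 // ?HM.
Qed.

Lemma dual_ub p x : ball_g g x -> inner p x <= dual_g g p.
Proof. by move=> hx; apply: sup_upper_bound (dual_has_sup p) _ _; exists x. Qed.

Lemma dual_le p c : (forall x, ball_g g x -> inner p x <= c) -> dual_g g p <= c.
Proof.
move=> h; apply: ge_sup; first by exists (inner p 0), 0 => //; rewrite /ball_g /= (g0 hg).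
by move=> _ [x hx <-]; exact: h.
Qed.

Lemma dual_ge0 p : 0 <= dual_g g p.
Proof. by rewrite -(inner0r p); apply: dual_ub; rewrite /ball_g /= (g0 hg). Qed.

Lemma inner_le_dual p x : inner p x <= dual_g g p * g x.
Proof.
have [gx0|gx0] := eqVneq (g x) 0.
  by rewrite (g_eq0 hg gx0) inner0r (g0 hg) mulr0.
have gxp : 0 < g x by rewrite lt_def gx0 (g_ge0 hg).
have hb : ball_g g ((g x)^-1 *: x).
  by rewrite /ball_g /= (gZ hg) ger0_norm ?invr_ge0 ?(ltW gxp) // mulVf.
have := dual_ub p hb; rewrite innerZr.
by move=> h; rewrite -ler_pdivrMr // mulrC.
Qed.

Lemma dual_attained p : exists2 z, ball_g g z & inner p z = dual_g g p.
Proof.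
pose S := ball_g g.
have S0 : S !=set0 by exists 0; rewrite /S /ball_g /= (g0 hg).
have cS : compact S.
  apply: bounded_closed_compact.
    have [M HM] := ball_bounded.
    exists M; split; first exact: num_real.
    by move=> N hN x /HM hx; exact: (le_trans hx (ltW hN)).
  apply: (@preimage_closed _ _ g [set r | r <= 1]).
    by move=> x _; exact: g_cont.
  exact: closed_le.
have cf : {within S, continuous (inner p)}.
  apply: continuous_subspaceT; apply: (@lip_cont _ _ _ (\sum_i `|p 0 i|)).
    by apply: sumr_ge0.
  by move=> x y; rewrite -innerBr; exact: inner_abs_le.
have [c cS' cmax] := EVT_max_rV S0 cS cf.
rewrite inE in cS'.
exists c => //; apply/eqP; rewrite eq_le dual_ub //=.
by apply: dual_le => x hx; apply: cmax; rewrite inE.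
Qed.

Lemma Ncone_iff p y : dual_g g p <= 1 -> (Ncone g p y <-> inner p y = g y).
Proof.
move=> hp; rewrite /Ncone; case: ifP => [/eqP h1|/negbT h1].
  split.
    move=> [t [x [t0 [[/= gx1 ipx] ->]]]].
    rewrite innerZr ipx mulr1 (gZp hg) //.
    apply/eqP; rewrite eq_le; apply/andP; split.
      by have := inner_le_dual p (t *: x); rewrite h1 mul1r innerZr ipx mulr1 (gZp hg).
    by rewrite -[X in _ <= X]mulr1 ler_wpM2l.
  move=> hy; have [->|y0] := eqVneq y 0.
    have [z hz iz] := dual_attained p.
    by exists 0, z; rewrite scale0r; split => //; split => //; split => //; rewrite iz h1.
  have gy : 0 < g y by rewrite lt_def (g_ge0 hg) andbT; apply/negP => /eqP/(g_eq0 hg)/eqP; rewrite (negbTE y0).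
  exists (g y), ((g y)^-1 *: y); split; first exact: ltW.
  split; last by rewrite scalerA mulfV ?gt_eqF // scale1r.
  split; first by rewrite /ball_g /= (gZ hg) ger0_norm ?invr_ge0 ?(ltW gy) // mulVf ?gt_eqF.
  by rewrite innerZr hy mulVf ?gt_eqF.
have hlt : dual_g g p < 1 by rewrite lt_neqAle h1 hp.
split; first by move=> ->; rewrite inner0r (g0 hg).
move=> hy; have := inner_le_dual p y; rewrite hy => h.
have gy0 : g y = 0.
  apply/eqP; rewrite eq_le (g_ge0 hg) andbT.
  have hg0 := g_ge0 hg y; have dg0 := dual_ge0 p.
  nra.
by rewrite (g_eq0 hg gy0).
Qed.

Lemma skewness1 : (0 < d)%N -> skewness g = 1.
Proof.
move=> d0; rewrite /skewness.
suff -> : [set g x / g (- x) | x in [set x : vec | x != 0]] = [set 1] by rewrite sup1.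
apply/seteqP; split => [_ [x /= x0 <-]|_ ->].
  rewrite (gN hg) // mulfV //; apply/negP => /eqP/(g_eq0 hg)/eqP; by rewrite (negbTE x0).
pose e : vec := delta_mx 0 (Ordinal d0).
have e0 : e != 0.
  apply/negP => /eqP/rowP/(_ (Ordinal d0)); rewrite !mxE !eqxx /=.
  by move/eqP; rewrite oner_eq0.
exists e => //=; rewrite (gN hg) // mulfV //.
apply/negP => /eqP/(g_eq0 hg)/eqP; by rewrite (negbTE e0).
Qed.

End Dual.


Section HB.
Variables (R : realType) (d : nat).
Local Notation vec := 'rV[R]_d.
Implicit Types p x y r : vec.

Definition sublin (f : vec -> R) :=
  (forall x y, f (x + y) <= f x + f y) /\ (forall a x, 0 < a -> f (a *: x) = a * f x).

Lemma sublin0 f : sublin f -> f 0 = 0.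
Proof.
case=> _ h; have := h 2 0 (ltr0Sn _ 1); rewrite scaler0 => e; lra.
Qed.

Lemma inner_deltal i r : inner (delta_mx 0 i) r = r 0 i.
Proof.
rewrite /inner (bigD1 i) //= big1 ?addr0; first by rewrite mxE !eqxx mul1r.
by move=> j ji; rewrite mxE (negbTE ji) andbF mul0r.
Qed.

Lemma HB f : sublin f -> exists p, forall r, inner p r <= f r.
Proof.
move=> hf; have f0 := sublin0 hf; case: hf => fD fZ.
suff : forall k, (k <= d)%N -> exists c : vec, forall r,
    (forall i : 'I_d, (k <= i)%N -> r 0 i = 0) -> inner c r <= f r.
  move=> /(_ d (leqnn d)) [c hc]; exists c => r; apply: hc => i.
  by rewrite leqNgt ltn_ord.
elim=> [_|k IH hk].
  exists 0 => r hr; have -> : r = 0 by apply/rowP => i; rewrite mxE hr.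
  by rewrite inner0l f0.
have [c hc] := IH (ltnW hk).
pose kk := Ordinal hk.
pose e : vec := delta_mx 0 kk.
pose V r := forall i : 'I_d, (k <= i)%N -> r 0 i = 0.
have VD r r' : V r -> V r' -> V (r + r') by move=> h h' i hi; rewrite mxE h ?h'// addr0.
have VZ a r : V r -> V (a *: r) by move=> h i hi; rewrite mxE h // mulr0.
have V0 : V 0 by move=> i _; rewrite mxE.
have key r r' : V r -> V r' -> inner c r - f (r - e) <= f (r' + e) - inner c r'.
  move=> hr hr'; have := hc _ (VD _ _ hr hr'); rewrite innerDr => h1.
  have := fD (r - e) (r' + e); rewrite addrCA subrK addrC => h2; lra.
pose L := [set inner c r - f (r - e) | r in V].
have L0 : L !=set0 by exists (inner c 0 - f (0 - e)), 0.
have Lub r' : V r' -> ubound L (f (r' + e) - inner c r').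
  by move=> hr' _ [r hr <-]; exact: key.
have hL : has_sup L by split => //; exists (f (0 + e) - inner c 0); exact: Lub.
pose ck := sup L.
exists (c + (ck - c 0 kk) *: e) => r hr.
pose t := r 0 kk.
pose r0 := r - t *: e.
have hr0 : V r0.
  move=> i hi; rewrite !mxE; have [ik|ik] := eqVneq i kk.
    by rewrite ik eqxx mulr1 subrr.
  rewrite hr ?(negbTE ik) ?mulr0 ?subr0 //.
  rewrite ltn_neqAle hi andbT; apply: contra ik => /eqP ik.
  by apply/eqP/val_inj; rewrite /= ik.
have rE : r = r0 + t *: e by rewrite subrK.
have -> : inner (c + (ck - c 0 kk) *: e) r = inner c r0 + t * ck.
  rewrite innerDl innerZl inner_deltal {1}rE innerDr innerZr inner_delta -/t.
  rewrite /e; lra.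
rewrite [in X in _ <= X]rE.
have [t0|t0|t0] := ltgtP t 0.
- pose s := - t.
  have s0 : 0 < s by rewrite /s oppr_gt0.
  have h := sup_upper_bound hL (_ : L (inner c (s^-1 *: r0) - f (s^-1 *: r0 - e))).
  have {}h := h (ex_intro2 _ _ _ (VZ _ _ hr0) erefl).
  have hf : f (r0 + t *: e) = s * f (s^-1 *: r0 - e).
    rewrite -fZ // scalerDr scalerA mulfV ?gt_eqF // scale1r.
    by rewrite scalerN /s scaleNr opprK.
  have hi : inner c r0 = s * inner c (s^-1 *: r0) by rewrite innerZr mulrA mulfV ?gt_eqF // mul1r.
  rewrite hf hi.
  have : s * (inner c (s^-1 *: r0) - f (s^-1 *: r0 - e)) <= s * ck by rewrite ler_wpM2l // ltW.
  rewrite /s; lra.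
- have h : ck <= f (t^-1 *: r0 + e) - inner c (t^-1 *: r0).
    by apply: ge_sup => //; apply: Lub; exact: VZ.
  have hf : f (r0 + t *: e) = t * f (t^-1 *: r0 + e).
    by rewrite -fZ // scalerDr scalerA mulfV ?gt_eqF // scale1r.
  have hi : inner c r0 = t * inner c (t^-1 *: r0) by rewrite innerZr mulrA mulfV ?gt_eqF // mul1r.
  rewrite hf hi.
  have : t * ck <= t * (f (t^-1 *: r0 + e) - inner c (t^-1 *: r0)) by rewrite ler_wpM2l // ltW.
  lra.
- by rewrite t0 scale0r addr0 mul0r addr0; apply: hc.
Qed.

Lemma inf_le (S : set R) (a : R) : has_lbound S -> S a -> inf S <= a.
Proof. by move=> hS Sx; apply: ge_inf. Qed.

Lemma sandwich f h : sublin f -> sublin h -> (forall r, 0 <= f r + h r) ->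
  exists p, forall r, inner p r <= f r /\ - inner p r <= h r.
Proof.
move=> hf hh fh.
have f0 := sublin0 hf; have h0 := sublin0 hh.
case: hf => fD fZ; case: hh => hD hZ.
pose S r := [set f (r + z) + h z | z in [set: vec]].
pose k r := inf (S r).
have Sne r : S r !=set0 by exists (f (r + 0) + h 0), 0.
have Slb r : has_lbound (S r).
  exists (- f (- r)) => _ [z _ <-].
  have := fD (r + z) (- r); rewrite addrC addKr => e1.
  have := fh z; lra.
have kle r z : k r <= f (r + z) + h z by apply: inf_le => //; exists z.
have kge r c : (forall z, c <= f (r + z) + h z) -> c <= k r.
  by move=> hc; apply: lb_le_inf => // _ [z _ <-].
have hk : sublin k.
  split.
    move=> x y.
    suff : k (x + y) - k y <= k x by lra.
    apply: (kge) => z1.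
    suff : k (x + y) - (f (x + z1) + h z1) <= k y by lra.
    apply: (kge) => z2.
    have := kle (x + y) (z1 + z2).
    have := fD (x + z1) (y + z2); have := hD z1 z2.
    rewrite (_ : x + z1 + (y + z2) = x + y + (z1 + z2)); last first.
      by rewrite addrACA.
    lra.
  move=> a x a0; apply/eqP; rewrite eq_le; apply/andP; split.
    rewrite mulrC -ler_pdivrMr //; apply: (kge) => z.
    rewrite ler_pdivrMr // mulrC.
    have := kle (a *: x) (a *: z); rewrite -scalerDr fZ // hZ // -mulrDr.
    done.
  apply: (kge) => z.
  have := kle x (a^-1 *: z).
  move=> e1.
  have -> : f (a *: x + z) + h z = a * (f (x + a^-1 *: z) + h (a^-1 *: z)).
    by rewrite mulrDr -fZ // -hZ // scalerDr !scalerA mulfV ?gt_eqF // !scale1r.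
  by rewrite ler_wpM2l // ltW.
have [p hp] := HB hk.
exists p => r; split.
  by apply: le_trans (hp r) _; apply: le_trans (kle r 0) _; rewrite addr0 h0 addr0.
rewrite -innerNr; apply: le_trans (hp (- r)) _; apply: le_trans (kle (- r) r) _.
by rewrite addNr f0 add0r.
Qed.

Lemma sublin_inner p : sublin (inner p).
Proof. by split => [x y|a x _]; rewrite ?innerDr ?innerZr. Qed.

Lemma sum_rule (S : seq vec) (chi : vec -> vec -> R) (p0 : vec) :
  uniq S -> (forall s, s \in S -> sublin (chi s)) ->
  (forall r, 0 <= inner p0 r + \sum_(s <- S) chi s r) ->
  exists P : vec -> vec, (forall s, s \in S -> forall r, inner (P s) r <= chi s r)
    /\ p0 + \sum_(s <- S) P s = 0.
Proof.
elim: S p0 => [|s S IH] p0 /=.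
  move=> _ _ h; exists (fun _ => 0); split => //.
  rewrite big_nil addr0; apply: inner_ge0_eq0 => r.
  by have := h r; rewrite big_nil addr0.
move=> /andP[sS uS] hchi h.
have hchi' : forall t, t \in S -> sublin (chi t).
  by move=> t tS; apply: hchi; rewrite inE tS orbT.
pose G r := inner p0 r + \sum_(t <- S) chi t r.
have hG : sublin G.
  split.
    move=> x y; rewrite /G innerDr.
    suff : \sum_(t <- S) chi t (x + y) <= \sum_(t <- S) chi t x + \sum_(t <- S) chi t y by lra.
    rewrite -big_split /= big_seq [X in _ <= X]big_seq; apply: ler_sum => t tS.
    by case: (hchi' t tS) => hD _; exact: hD.
  move=> a x a0; rewrite /G innerZr mulrDr mulr_sumr; congr (_ + _).
  rewrite mulr_sumr; apply: eq_big_seq => t tS.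
  by case: (hchi' t tS) => _ hZ; exact: hZ.
have hfG : forall r, 0 <= chi s r + G r.
  by move=> r; have := h r; rewrite big_cons /G; lra.
have [p hp] := sandwich (hchi s (mem_head _ _)) hG hfG.
have hIH : forall r, 0 <= inner (p0 + p) r + \sum_(t <- S) chi t r.
  move=> r; have := (hp r).2; rewrite innerDl /G; lra.
have [P' [hP'1 hP'2]] := IH (p0 + p) uS hchi' hIH.
exists (fun t => if t == s then p else P' t); split.
  move=> t; rewrite inE; have [-> _|ts /= tS] := eqVneq t s.
    by move=> r; exact: (hp r).1.
  exact: hP'1.
rewrite big_cons eqxx addrA.
rewrite (eq_big_seq P') ?hP'2 // => t tS.
by have -> : (t == s) = false by apply/negbTE; apply: contraNneq sS => <-.
Qed.

End HB.


Lemma wsum_big (R : realType) (d : nat) (T : lmodType R) (D C : seq 'rV[R]_d)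
  (w v : 'rV[R]_d -> R) (F : 'rV[R]_d -> T) : uniq D -> uniq C ->
  \sum_(s <- wsum_pts D C) wsum_wt D w C v s *: F s =
  \sum_(s <- D) w s *: F s + \sum_(s <- C) v s *: F s.
Proof.
move=> uD uC; rewrite /wsum_wt.
under eq_bigr do rewrite scalerDl.
rewrite big_split /=.
have H (E : seq 'rV[R]_d) (a : 'rV[R]_d -> R) : uniq E -> {subset E <= wsum_pts D C} ->
    \sum_(s <- wsum_pts D C) (if s \in E then a s else 0) *: F s = \sum_(s <- E) a s *: F s.
  move=> uE sE.
  rewrite (eq_bigr (fun s => if s \in E then a s *: F s else 0)); last first.
    by move=> s _; case: ifP => _ //; rewrite scale0r.
  rewrite -big_mkcond -big_filter; apply: perm_big.
  apply: uniq_perm; [by rewrite filter_uniq // undup_uniq | by [] |].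
  by move=> s; rewrite mem_filter; case sEb: (s \in E) => //=; rewrite sE.
congr (_ + _); apply: H => // s sD; rewrite /wsum_pts mem_undup mem_cat sD ?orbT //.
Qed.

Lemma wsum_big_R (R : realType) (d : nat) (D C : seq 'rV[R]_d)
  (w v : 'rV[R]_d -> R) (F : 'rV[R]_d -> R) : uniq D -> uniq C ->
  \sum_(s <- wsum_pts D C) wsum_wt D w C v s * F s =
  \sum_(s <- D) w s * F s + \sum_(s <- C) v s * F s.
Proof. move=> uD uC; have := (@wsum_big R d R^o D C w v F uD uC). move=> ->. done. Qed.

Section FW.
Variables (R : realType) (d : nat) (g : 'rV[R]_d -> R).
Hypothesis hg : is_norm g.
Local Notation vec := 'rV[R]_d.

Lemma fw_subgrad (P : seq vec) (u : vec -> R) x :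
  uniq P -> (forall s, s \in P -> 0 < u s) -> FW_point g P u x ->
  exists pi : vec -> vec,
    (forall s, s \in P -> dual_g g (pi s) <= 1 /\ inner (pi s) (x - s) = g (x - s))
    /\ \sum_(s <- P) u s *: pi s = 0.
Proof.
move=> uP up hx.
pose el s r t := g (r + t *: (x - s)) - t * g (x - s).
pose Sset s r := [set el s r t | t in [set t : R | 0 <= t]].
pose psi s r := inf (Sset s r).
have Sne s r : Sset s r !=set0 by exists (el s r 0), 0 => //=.
have el_lb s r t : 0 <= t -> - g r <= el s r t.
  move=> t0; rewrite /el.
  have := gD hg (r + t *: (x - s)) (- r); rewrite addrC addKr (gZp hg) // (gN hg).
  lra.
have Slb s r : has_lbound (Sset s r).
  by exists (- g r) => _ [t t0 <-]; exact: el_lb.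
have ple s r t : 0 <= t -> psi s r <= el s r t.
  by move=> t0; apply: inf_le => //; exists t.
have pge s r c : (forall t, 0 <= t -> c <= el s r t) -> c <= psi s r.
  by move=> hc; apply: lb_le_inf => // _ [t t0 <-]; exact: hc.
have psi_sub s : sublin (psi s).
  split.
    move=> a b.
    suff : psi s (a + b) - psi s b <= psi s a by lra.
    apply: (pge) => t1 t10.
    suff : psi s (a + b) - el s a t1 <= psi s b by lra.
    apply: (pge) => t2 t20.
    have := ple s (a + b) (t1 + t2) (addr_ge0 t10 t20).
    have := gD hg (a + t1 *: (x - s)) (b + t2 *: (x - s)).
    rewrite addrACA -scalerDl /el mulrDl; lra.
  move=> c a c0; apply/eqP; rewrite eq_le; apply/andP; split.
    rewrite mulrC -ler_pdivrMr //; apply: (pge) => t t0.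
    rewrite ler_pdivrMr // mulrC.
    have := ple s (c *: a) (c * t) (mulr_ge0 (ltW c0) t0).
    suff -> : el s (c *: a) (c * t) = c * el s a t by [].
    by rewrite /el -scalerA -scalerDr (gZp hg) ?(ltW c0) // mulrBr mulrA.
  apply: (pge) => t t0.
  have -> : el s (c *: a) t = c * el s a (c^-1 * t).
    rewrite /el mulrBr -[c * g _](gZp hg _ (ltW c0)); congr (g _ - _).
      by rewrite [in RHS]scalerDr scalerA mulrA mulfV ?gt_eqF // mul1r.
    by rewrite !mulrA mulfV ?gt_eqF // mul1r.
  by rewrite ler_wpM2l ?(ltW c0) // ple // mulr_ge0 // invr_ge0 ltW.
pose chi s r := u s * psi s r.
have chi_sub s : s \in P -> sublin (chi s).
  move=> sP; case: (psi_sub s) => pD pZ; split.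
    by move=> a b; rewrite /chi -mulrDr ler_wpM2l ?(ltW (up s sP)) ?pD.
  by move=> c a c0; rewrite /chi pZ // mulrCA.
have el_mono s r t T : 0 <= t -> t <= T -> el s r T <= el s r t.
  move=> t0 tT; rewrite /el.
  have := gD hg (r + t *: (x - s)) ((T - t) *: (x - s)).
  rewrite -addrA -scalerDl (addrC t) subrK (gZp hg) ?subr_ge0 // mulrBl.
  have := g_ge0 hg (x - s); lra.
have getT r e : 0 < e -> exists T, 1 <= T /\ forall s, s \in P -> el s r T <= psi s r + e.
  move=> e0; elim: (P) => [|s Q [T [T1 HT]]]; first by exists 1.
  have [t' /= [t t0 <-] ht] := inf_adherent e0 (conj (Sne s r) (Slb s r)).
  exists (Num.max T t); split; first by rewrite le_max T1.
  move=> s'; rewrite inE => /orP[/eqP ->|s'Q].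
    apply: le_trans (ltW ht); apply: el_mono => //; by rewrite le_max lexx orbT.
  apply: le_trans (HT _ s'Q); apply: el_mono; first by apply: le_trans T1.
  by rewrite le_max lexx.
have chi_pos r : 0 <= inner 0 r + \sum_(s <- P) chi s r.
  rewrite inner0l add0r.
  pose U := \sum_(s <- P) u s.
  have U0 : 0 <= U by rewrite /U big_seq; apply: sumr_ge0 => s sP; exact: ltW (up s sP).
  suff H : forall e, 0 < e -> 0 <= \sum_(s <- P) chi s r + e * U.
    rewrite leNgt; apply/negP => hneg.
    pose e := - (\sum_(s <- P) chi s r) / (2 * (U + 1)).
    have e0 : 0 < e by rewrite /e divr_gt0 ?oppr_gt0 //; lra.
    have := H e e0.
    have : e * U <= e * (U + 1) by rewrite ler_wpM2l ?(ltW e0) //; lra.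
    have : e * (U + 1) = - (\sum_(s <- P) chi s r) / 2.
      have hU : U + 1 != 0 by apply: lt0r_neq0; lra.
      by rewrite /e; field.
    lra.
  move=> e e0; have [T [T1 HT]] := getT r e e0.
  have T0 : 0 < T by lra.
  have h1 : \sum_(s <- P) u s * el s r T <= \sum_(s <- P) chi s r + e * U.
    rewrite /U mulr_sumr -big_split /= big_seq [X in _ <= X]big_seq.
    apply: ler_sum => s sP; rewrite /chi (mulrC e) -mulrDr.
    by rewrite ler_wpM2l ?(ltW (up s sP)) // HT.
  apply: le_trans h1.
  have h2 : forall s, u s * el s r T =
      T * (u s * g (x + T^-1 *: r - s) - u s * g (x - s)).
    move=> s; rewrite /el mulrBr [RHS]mulrBr; congr (_ - _); last by rewrite mulrCA.
    rewrite mulrCA -(gZp hg _ (ltW T0)); congr (_ * g _).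
    rewrite !scalerDr !scalerN scalerA mulfV ?gt_eqF // scale1r.
    by rewrite addrA (addrC r).
  under eq_bigr do rewrite h2.
  rewrite -mulr_sumr sumrB mulr_ge0 ?(ltW T0) // subr_ge0.
  exact: hx.
have [P' [hP'1 hP'2]] := sum_rule uP chi_sub chi_pos.
rewrite add0r in hP'2.
exists (fun s => (u s)^-1 *: P' s); split; last first.
  rewrite -[RHS]hP'2; apply: eq_big_seq => s sP.
  by rewrite scalerA mulfV ?scale1r // gt_eqF // up.
move=> s sP.
have hi r : inner ((u s)^-1 *: P' s) r <= psi s r.
  have := hP'1 s sP r; rewrite /chi innerZl => h.
  by rewrite -(ler_pM2l (up s sP)) mulrA mulfV ?gt_eqF ?up // mul1r.
have hd : dual_g g ((u s)^-1 *: P' s) <= 1.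
  apply: dual_le => // z hz; apply: le_trans (hi z) _; apply: le_trans (ple s z 0 (lexx 0)) _.
  by rewrite /el scale0r addr0 mul0r subr0.
split => //.
apply/eqP; rewrite eq_le; apply/andP; split.
  apply: le_trans (inner_le_dual hg _ _) _.
  by rewrite -[X in _ <= X]mul1r ler_wpM2r ?(g_ge0 hg).
have := le_trans (hi (- (x - s))) (ple s _ 1 ler01).
rewrite /el scale1r addNr (g0 hg) mul1r add0r innerNr; lra.
Qed.

End FW.


Section Main.
Variables (R : realType) (d : nat) (g : 'rV[R]_d -> R).
Hypothesis hg : is_norm g.
Local Notation vec := 'rV[R]_d.

Lemma bounded_d0 (A : set vec) : d = 0%N -> bounded_set A.
Proof. by move=> d0; exists 0 => x _ i; have := ltn_ord i; rewrite {2}d0. Qed.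

Lemma inner_le_g p y : dual_g g p <= 1 -> inner p y <= g y.
Proof.
move=> hp; apply: le_trans (inner_le_dual hg p y) _.
by rewrite -[X in _ <= X]mul1r ler_wpM2r ?(g_ge0 hg).
Qed.

Lemma dir1 : (forall A, bounded_set (EH g A)) -> uniformly_robust g.
Proof.
move=> hEH D w [uD wD]; exists (EH g D); split; first exact: hEH.
move=> C v [uC vC] hskew x hx.
have uP : uniq (wsum_pts D C) by exact: undup_uniq.
have up : forall s, s \in wsum_pts D C -> 0 < wsum_wt D w C v s.
  move=> s; rewrite mem_undup mem_cat /wsum_wt.
  case: (boolP (s \in D)) => sD; case: (boolP (s \in C)) => sC //= _.
  - have := wD s sD; have := vC s sC; lra.
  - by rewrite addr0 wD.
  - by rewrite add0r vC.
have [pi [hpi hsum]] := fw_subgrad hg uP up hx.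
have DP s : s \in D -> s \in wsum_pts D C by move=> sD; rewrite mem_undup mem_cat sD.
have CP s : s \in C -> s \in wsum_pts D C by move=> sC; rewrite mem_undup mem_cat sC orbT.
have hCpi : Cpi g D pi x.
  move=> s sD; exists (x - s); split; last by rewrite addrC subrK.
  apply/(Ncone_iff hg _ (hpi s (DP s sD)).1); exact: (hpi s (DP s sD)).2.
exists pi; split; first by move=> s sD; exact: (hpi s (DP s sD)).1.
split; first by exists x.
split => //.
have [d0|dpos] := eqVneq d 0%N; first exact: bounded_d0.
rewrite skewness1 ?lt0n // mul1r in hskew.
rewrite wsum_big // in hsum.
pose wD' := total_weight D w; pose vC' := total_weight C v.
pose kap := \sum_(s <- D) w s * g s - \sum_(s <- D) w s * inner (pi s) s.
have [M [M0 HM]] := coord_lower hg.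
exists (M * (kap / (wD' - vC'))) => y hy i.
apply: le_trans (HM y i) _; rewrite ler_wpM2l //.
have hwv : 0 < wD' - vC' by rewrite subr_gt0.
rewrite ler_pdivlMr //.
have hyD : forall s, s \in D -> inner (pi s) (y - s) = g (y - s).
  move=> s sD; have [z [hz ->]] := hy s sD; rewrite addrC addKr.
  by apply/(Ncone_iff hg _ (hpi s (DP s sD)).1).
have h1 : \sum_(s <- D) w s * g (y - s) =
    \sum_(s <- D) w s * inner (pi s) y - \sum_(s <- D) w s * inner (pi s) s.
  rewrite -sumrB; apply: eq_big_seq => s sD.
  by rewrite -hyD // innerBr mulrBr.
have hs2 : \sum_(s <- D) w s *: pi s = - \sum_(s <- C) v s *: pi s.
  by apply/eqP; rewrite -addr_eq0; apply/eqP.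
have h2 : \sum_(s <- D) w s * inner (pi s) y = - \sum_(s <- C) v s * inner (pi s) y.
  have e S (a : vec -> R) : \sum_(s <- S) a s * inner (pi s) y = inner (\sum_(s <- S) a s *: pi s) y.
    by rewrite inner_suml; apply: eq_bigr => s _; rewrite innerZl.
  by rewrite !e hs2 innerNl.
have h3 : - \sum_(s <- C) v s * inner (pi s) y <= vC' * g y.
  rewrite /vC' /total_weight mulr_suml -sumrN big_seq [X in _ <= X]big_seq.
  apply: ler_sum => s sC; rewrite -mulrN -innerNr ler_wpM2l ?(ltW (vC s sC)) //.
  by rewrite -(gN hg y); apply: inner_le_g; exact: (hpi s (CP s sC)).1.
have h4 : wD' * g y - \sum_(s <- D) w s * g s <= \sum_(s <- D) w s * g (y - s).
  rewrite /wD' /total_weight mulr_suml -sumrB big_seq [X in _ <= X]big_seq.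
  apply: ler_sum => s sD; rewrite -mulrBr ler_wpM2l ?(ltW (wD s sD)) //.
  exact: gB.
rewrite /kap; lra.
Qed.

Lemma sum_le_eq (r : seq vec) (a : vec -> R) :
  (forall s, s \in r -> a s <= 1) -> \sum_(s <- r) a s = \sum_(s <- r) 1 ->
  forall s, s \in r -> a s = 1.
Proof.
elim: r => [//|s0 r IH] ha; rewrite !big_cons => he s.
have h0 := ha s0 (mem_head _ _).
have hr : \sum_(s <- r) a s <= \sum_(s <- r) 1.
  by rewrite big_seq [X in _ <= X]big_seq; apply: ler_sum => t tr; apply: ha; rewrite inE tr orbT.
rewrite inE => /orP[/eqP ->|sr]; first lra.
apply: IH => //; first by move=> t tr; apply: ha; rewrite inE tr orbT.
lra.
Qed.

Lemma dir2 : uniformly_robust g -> forall A, bounded_set (EH g A).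
Proof.
move=> hUR A.
have [d0|dpos] := eqVneq d 0%N; first exact: bounded_d0.
have hd : (0 < d)%N by rewrite lt0n.
pose D := undup A.
pose w := fun _ : vec => (1 : R).
have hw : wset D w by split; [exact: undup_uniq | move=> s _; exact: ltr01].
have [K [[MK hMK] hK]] := hUR D w hw.
exists MK => x [pi [adm [ne [bnd hx]]]] i; apply: hMK.
have DA s : (s \in D) = (s \in A) by rewrite mem_undup.
have hin s y : s \in A -> Cpi g A pi y -> inner (pi s) (y - s) = g (y - s).
  move=> sA hy; have [z [hz ->]] := hy s sA; rewrite addrC addKr.
  by apply/(Ncone_iff hg _ (adm s sA)).
pose q := \sum_(s <- D) pi s.
pose n := total_weight D w.
have dq_le : dual_g g q <= n.
  apply: dual_le => // z hz; rewrite /q inner_suml /n /total_weight.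
  rewrite big_seq [X in _ <= X]big_seq; apply: ler_sum => s sD.
  apply: le_trans (inner_le_g _ _) hz; apply: adm; by rewrite -DA.
have ray z : z != 0 -> (forall s, s \in A -> inner (pi s) z = g z) -> False.
  move=> z0 hz; have [y0 hy0] := ne.
  have hray t : 0 <= t -> Cpi g A pi (y0 + t *: z).
    move=> t0 s sA; have [ws [hws ey0]] := hy0 s sA.
    exists (ws + t *: z); split; last by rewrite ey0 addrA.
    apply/(Ncone_iff hg _ (adm s sA)); apply/eqP; rewrite eq_le inner_le_g ?adm //=.
    rewrite innerDr innerZr hz //.
    have := (Ncone_iff hg ws (adm s sA)).1 hws => ->.
    apply: le_trans (gD hg _ _) _; by rewrite (gZp hg _ t0).
  have [j zj] : exists j, z 0 j != 0.
    apply/existsP; apply: contraNT z0 => /existsPn hz0.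
    by apply/eqP/rowP => j; rewrite mxE; apply/eqP; have := hz0 j; rewrite negbK.
  have [M hM] := bnd.
  have hMy0 := hM _ hy0 j.
  pose t := (M + `|y0 0 j| + 1) / `|z 0 j|.
  have zj0 : 0 < `|z 0 j| by rewrite normr_gt0.
  have t0 : 0 <= t by rewrite /t divr_ge0 //; have := normr_ge0 (y0 0 j); lra.
  have := hM _ (hray t t0) j.
  rewrite !mxE.
  have htz : `|t * z 0 j| = M + `|y0 0 j| + 1.
    by rewrite normrM ger0_norm // /t mulrAC -mulrA mulfV ?gt_eqF // mulr1.
  have := ler_normB (y0 0 j + t * z 0 j) (y0 0 j).
  rewrite addrC addrK htz; lra.
have dq_lt : dual_g g q < n.
  rewrite lt_neqAle dq_le andbT; apply/negP => /eqP hq.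
  have [An|[s0 [A' eA]]] : A = [::] \/ exists s0 A', A = s0 :: A'.
    by case: (A) => [|s0 A']; [left | right; exists s0, A'].
    pose e : vec := delta_mx 0 (Ordinal hd).
    have e0 : e != 0.
      apply/negP => /eqP/rowP/(_ (Ordinal hd)); rewrite !mxE !eqxx /=.
      by move/eqP; rewrite oner_eq0.
    by apply: (ray e e0) => s; rewrite An.
  have [z hz iz] := dual_attained hg q.
  rewrite hq /q inner_suml in iz.
  have h1 : forall s, s \in D -> inner (pi s) z = 1.
    apply: sum_le_eq => // s sD; apply: le_trans (inner_le_g _ _) hz.
    by apply: adm; rewrite -DA.
  have s0D : s0 \in D by rewrite DA eA mem_head.
  have gz : g z = 1.
    apply/eqP; rewrite eq_le hz /= -(h1 s0 s0D); apply: inner_le_g.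
    by apply: adm; rewrite -DA.
  apply: (ray z).
    by apply/negP => /eqP z0; move: gz; rewrite z0 (g0 hg) => /eqP; rewrite eq_sym oner_eq0.
  by move=> s sA; rewrite gz h1 // DA.
have dq0 := dual_ge0 hg q.
pose v := (dual_g g q + n) / 2.
have v0 : 0 < v by rewrite /v; lra.
have hC : wset [:: x] (fun _ => v) by split => // s _.
have hsk : skewness g * total_weight [:: x] (fun _ => v) < total_weight D w.
  rewrite skewness1 // mul1r /total_weight big_cons big_nil addr0 -/(total_weight D w) -/n.
  rewrite /v; lra.
apply: (hK [:: x] (fun _ => v) hC hsk x) => y.
rewrite /fw_obj !wsum_big_R ?undup_uniq // !big_cons !big_nil !addr0 /w.
have e1 : inner q (y - x) + \sum_(s <- D) 1 * g (x - s) <= \sum_(s <- D) 1 * g (y - s).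
  rewrite /q inner_suml -big_split /= big_seq [X in _ <= X]big_seq.
  apply: ler_sum => s sD; rewrite !mul1r.
  have sA : s \in A by rewrite -DA.
  rewrite -(hin s x sA hx) -innerDr addrA subrK.
  by apply: inner_le_g; exact: adm.
have e2 : - inner q (y - x) <= v * g (y - x).
  rewrite -innerNr opprB; apply: le_trans (inner_le_dual hg _ _) _.
  rewrite -(gN hg) opprB ler_wpM2r ?(g_ge0 hg) // /v; lra.
rewrite subrr (g0 hg) mulr0; lra.
Qed.

Theorem main : is_norm g ->
  (uniformly_robust g <-> forall A : seq 'rV[R]_d, bounded_set (EH g A)).
Proof. by move=> _; split; [exact: dir2 | exact: dir1]. Qed.

End Main.


Theorem mainTheorem12 (R : realType) (d : nat) (g : 'rV[R]_d -> R) :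
  is_norm g ->
  (uniformly_robust g <-> forall A : seq 'rV[R]_d, bounded_set (EH g A)).
Proof. by move=> hg; split; [exact: dir2 hg | exact: dir1 hg]. Qed.
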